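(* Let $\lambda \ge \aleph_2$ be a regular cardinal and $S \subseteq \lambda$ stationary. Then the following are equivalent: (1) $\mathsf{uDSR}({<}\lambda, S)$; (2) $\mathsf{DSR}({<}\lambda, S)$; (3) $\mathsf{OSR}(S)$; (4) for every matrix $\langle S_{\alpha,i} \mid \alpha<\lambda,\ i<j_\alpha\rangle$ of stationary subsets of $S$ with $j_\alpha<\lambda$ for all $\alpha<\lambda$, there is $\gamma<\lambda$ with $\mathrm{cf}(\gamma)>\omega$ such that $S_{\alpha,i}$ reflects at $\gamma$ for all $\alpha<\gamma$ and all $i<j_\alpha$.
   Context: A set $T$ of ordinals reflects at an ordinal $\gamma$ if $\mathrm{cf}(\gamma)>\omega$ and $T\cap\gamma$ is stationary in $\gamma$. For $\lambda$ regular uncountable, $S\subseteq\lambda$ stationary and $\kappa\le\lambda$: $\mathsf{DSR}({<}\kappa,S)$ asserts that whenever $\langle S_{\alpha,i}\mid\alpha<\lambda,\ i<j_\alpha\rangle$ is a matrix of stationary subsets of $S$ with $j_\alpha<\kappa$ for all $\alpha$, there are $\gamma<\lambda$ of uncountable cofinality and a club $F\subseteq\gamma$ such that $S_{\alpha,i}$ reflects at $\gamma$ for all $\alpha\in F$, $i<j_\alpha$. $\mathsf{uDSR}({<}\kappa,S)$ is the same with ''club $F\subseteq\gamma$'' replaced by ''unbounded $F\subseteq\gamma$''. $\mathsf{OSR}(S)$ asserts that for every sequence $\langle S_\alpha\mid\alpha<\lambda\rangle$ of stationary subsets of $S$ there is $\delta<\lambda$ with $\mathrm{cf}(\delta)>\omega$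 such that $S_\alpha$ reflects at $\delta$ for all $\alpha<\delta$. *)

(* Defs.v *)
(* The regular cardinal lambda is modelled as an abstract
   well-ordered type (T, lt): elements of T are the ordinals < lambda. *)
From Stdlib Require Import Classical.

Section OrdinalNotions.
Variable T : Type.
Variable lt : T -> T -> Prop.
Local Infix "<<" := lt (at level 70).
Local Notation le x y := (lt x y \/ x = y).

Definition is_wellorder : Prop :=
  (forall x, ~ x << x) /\
  (forall x y z, x << y -> y << z -> x << z) /\
  (forall x y, x << y \/ x = y \/ y << x) /\
  well_founded lt.

Definition injects (A : Type) (B : Type) : Prop :=
  exists f : A -> B, forall a b, f a = f b -> a = b.

(* the initial segment {y | y < x}, i.e. the ordinal x *)
Definition seg (x : T) : Type := { y : T | y << x }.

Definition unbounded (A : T -> Prop) : Prop :=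
  forall x, exists a, A a /\ le x a.

(* lambda is a regular cardinal >= aleph_2:
   - it is a cardinal: no ordinal x < lambda is equinumerous to lambda;
   - regular: every unbounded subset has cardinality lambda;
   - >= aleph_2: some x < lambda is uncountable (then lambda > |x| >= aleph_1). *)
Definition regular_cardinal_ge_aleph2 : Prop :=
  is_wellorder /\
  (forall x, ~ injects T (seg x)) /\
  (forall A : T -> Prop, unbounded A -> injects T { a : T | A a }) /\
  (exists x, ~ injects (seg x) nat).

(* cf(gamma) > omega: gamma is nonzero and every countable subset of gamma is
   strictly bounded below gamma (this also excludes successors). *)
Definition uncountable_cof (g : T) : Prop :=
  (exists y, y << g) /\
  forall f : nat -> T, (forall n, f n << g) ->
    exists y, y << g /\ forall n, f n << y.

(* B is the ambient ordinal: B = fun _ => True for lambda itself,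
   B = fun x => x << g for an ordinal g < lambda. *)
Definition club_in (B C : T -> Prop) : Prop :=
  (forall x, C x -> B x) /\
  (forall x, B x -> exists c, C c /\ le x c) /\
  (forall d, B d -> (exists y, y << d) ->
     (forall x, x << d -> exists c, C c /\ x << c /\ c << d) -> C d).

Definition stationary_in (B X : T -> Prop) : Prop :=
  (forall x, X x -> B x) /\
  forall C, club_in B C -> exists x, X x /\ C x.

Definition below (g : T) : T -> Prop := fun x => x << g.

Definition stationary (X : T -> Prop) : Prop := stationary_in (fun _ => True) X.

Definition reflects (X : T -> Prop) (g : T) : Prop :=
  uncountable_cof g /\ stationary_in (below g) (fun x => X x /\ x << g).

Definition subset (X Y : T -> Prop) : Prop := forall x, X x -> Y x.

Definition stat_matrix (S : T -> Prop) (M : T -> T -> T -> Prop) (j : T -> T) : Prop :=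
  forall a i, i << j a -> stationary (M a i) /\ subset (M a i) S.

Definition uDSR_lt_lambda (S : T -> Prop) : Prop :=
  forall M j, stat_matrix S M j ->
    exists g, uncountable_cof g /\
      exists F, subset F (below g) /\ (forall x, x << g -> exists c, F c /\ le x c) /\
        forall a, F a -> forall i, i << j a -> reflects (M a i) g.

Definition DSR_lt_lambda (S : T -> Prop) : Prop :=
  forall M j, stat_matrix S M j ->
    exists g, uncountable_cof g /\
      exists F, club_in (below g) F /\
        forall a, F a -> forall i, i << j a -> reflects (M a i) g.

Definition OSR (S : T -> Prop) : Prop :=
  forall Sq : T -> T -> Prop,
    (forall a, stationary (Sq a) /\ subset (Sq a) S) ->
    exists d, uncountable_cof d /\ forall a, a << d -> reflects (Sq a) d.

Definition cond4 (S : T -> Prop) : Prop :=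
  forall M j, stat_matrix S M j ->
    exists g, uncountable_cof g /\
      forall a, a << g -> forall i, i << j a -> reflects (M a i) g.

End OrdinalNotions.

(* Main.v *)
Require Import Defs.
From Stdlib Require Import Classical ClassicalEpsilon Wellfounded FunctionalExtensionality.

Lemma sig_eq (T : Type) (P : T -> Prop) (s1 s2 : {x | P x}) :
  proj1_sig s1 = proj1_sig s2 -> s1 = s2.
Proof. destruct s1, s2; simpl; intros ->; f_equal; apply proof_irrelevance. Qed.

Lemma le_trans' (T : Type) (lt : T -> T -> Prop) (HW : is_wellorder T lt) a b c :
  (lt a b \/ a = b) -> (lt b c \/ b = c) -> (lt a c \/ a = c).
Proof. destruct HW as [_ [Htr _]]. intros [H|H] [H'|H']; subst; eauto. Qed.

Lemma lt_le_trans (T : Type) (lt : T -> T -> Prop) (HW : is_wellorder T lt) a b c :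
  lt a b -> (lt b c \/ b = c) -> lt a c.
Proof. destruct HW as [_ [Htr _]]. intros H [H'|H']; subst; eauto. Qed.

Lemma upper2 (T : Type) (lt : T -> T -> Prop) (HW : is_wellorder T lt) a b :
  exists c, (lt a c \/ a = c) /\ (lt b c \/ b = c).
Proof.
  destruct HW as [_ [_ [Htot _]]]. destruct (Htot a b) as [H|[H|H]].
  - exists b; auto.
  - subst; exists b; auto.
  - exists a; auto.
Qed.

Lemma club_below (T : Type) (lt : T -> T -> Prop) g :
  club_in T lt (below T lt g) (below T lt g).
Proof.
  split; [|split].
  - auto.
  - intros x Hx; exists x; auto.
  - intros d Hd _ _; exact Hd.
Qed.

Lemma stat_up (T : Type) (lt : T -> T -> Prop) B X Y :
  stationary_in T lt B X -> (forall x, X x -> Y x) -> (forall x, Y x -> B x) ->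
  stationary_in T lt B Y.
Proof.
  intros [_ H] HXY HYB; split; auto.
  intros C HC; destruct (H C HC) as [x [Hx Cx]]; eauto.
Qed.

Lemma stat_nonempty (T : Type) (lt : T -> T -> Prop) g X :
  stationary_in T lt (below T lt g) X -> exists x, X x.
Proof.
  intros [_ H]. destruct (H _ (club_below T lt g)) as [x [Hx _]]; eauto.
Qed.

Lemma stat_tail (T : Type) (lt : T -> T -> Prop) (HW : is_wellorder T lt) X c :
  stationary T lt X -> stationary T lt (fun x => X x /\ (lt c x \/ c = x)).
Proof.
  intros [_ HX]; split; [auto|].
  intros C [H1 [H2 H3]].
  destruct (HX (fun x => C x /\ (lt c x \/ c = x))) as [x [Hx [Cx Hcx]]].
  - split; [|split].
    + auto.
    + intros x _. destruct (upper2 T lt HW x c) as [z [Hxz Hcz]].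
      destruct (H2 z I) as [c' [Cc' Hzc']].
      exists c'; split; [split; auto|]; eapply le_trans'; eauto.
    + intros d _ [y Hy] Hlim. split.
      * apply H3; [exact I|exists y; exact Hy|].
        intros x Hx. destruct (Hlim x Hx) as [c' [[Cc' _] H]]; eauto.
      * destruct (Hlim y Hy) as [c' [[_ Hcc'] [_ Hc'd]]].
        left. destruct Hcc' as [Hcc'|Hcc']; [|subst; exact Hc'd].
        destruct HW as [_ [Htr _]]; eauto.
  - exists x; auto.
Qed.
Lemma small_bounded (T : Type) (lt : T -> T -> Prop)
  (HR : regular_cardinal_ge_aleph2 T lt) (A : T -> Prop) m
  (k : {a | A a} -> seg T lt m) (Hk : forall s1 s2, k s1 = k s2 -> s1 = s2) :
  exists B, forall a, A a -> lt a B.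
Proof.
  destruct HR as [[Hirr [Htr [Htot Hwf]]] [Hcard [Hreg Hunc]]].
  destruct (classic (unbounded T lt A)) as [Hu|Hu].
  - exfalso. destruct (Hreg A Hu) as [f Hf]. apply (Hcard m).
    exists (fun a => k (f a)). intros a b E. apply Hf, Hk, E.
  - unfold unbounded in Hu. apply not_all_ex_not in Hu. destruct Hu as [x Hx].
    exists x. intros a Ha. destruct (Htot x a) as [H|[H|H]]; auto;
    exfalso; apply Hx; eauto.
Qed.

Lemma seg_bound (T : Type) (lt : T -> T -> Prop)
  (HR : regular_cardinal_ge_aleph2 T lt) (h : T -> T) m :
  exists B, forall u, lt u m -> lt (h u) B.
Proof.
  pose (A := fun a => exists u, lt u m /\ h u = a).
  pose (k := fun s : {a | A a} =>
    exist (fun y => lt y m) (proj1_sig (constructive_indefinite_description _ (proj2_sig s)))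
       (proj1 (proj2_sig (constructive_indefinite_description _ (proj2_sig s))))).
  destruct (small_bounded T lt HR A m k) as [B HB].
  - intros s1 s2 E. apply sig_eq.
    apply (f_equal (@proj1_sig _ _)) in E. unfold k in E; simpl in E.
    rewrite <- (proj2 (proj2_sig (constructive_indefinite_description _ (proj2_sig s1)))).
    rewrite <- (proj2 (proj2_sig (constructive_indefinite_description _ (proj2_sig s2)))).
    rewrite E. reflexivity.
  - exists B. intros u Hu. apply HB. exists u; auto.
Qed.

Lemma nomax (T : Type) (lt : T -> T -> Prop)
  (HR : regular_cardinal_ge_aleph2 T lt) x : exists y, lt x y.
Proof.
  apply NNPP; intro Hn.
  destruct HR as [[Hirr [Htr [Htot Hwf]]] [Hcard [Hreg Hunc]]].
  assert (Hu : unbounded T lt (fun a => a = x)).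
  { intros z. exists x; split; auto. destruct (Htot z x) as [H|[H|H]]; auto.
    exfalso; apply Hn; eauto. }
  destruct (Hreg _ Hu) as [f Hf].
  assert (Hall : forall a b : T, a = b).
  { intros a b. apply Hf. apply sig_eq. rewrite (proj2_sig (f a)), (proj2_sig (f b)). reflexivity. }
  destruct Hunc as [x0 Hx0]. apply Hx0. exists (fun _ => 0). intros s1 s2 _.
  apply sig_eq, Hall.
Qed.

Lemma seg_bound_le (T : Type) (lt : T -> T -> Prop)
  (HR : regular_cardinal_ge_aleph2 T lt) (h : T -> T) m :
  exists B, forall u, (lt u m \/ u = m) -> lt (h u) B.
Proof.
  destruct (seg_bound T lt HR h m) as [B1 HB1].
  destruct (nomax T lt HR (h m)) as [y Hy].
  assert (HW : is_wellorder T lt) by apply HR.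
  destruct (upper2 T lt HW B1 y) as [z [H1 H2]].
  exists z. intros u [Hu|Hu].
  - eapply lt_le_trans; eauto.
  - subst; eapply lt_le_trans; eauto.
Qed.

Lemma box_bound (T : Type) (lt : T -> T -> Prop)
  (HR : regular_cardinal_ge_aleph2 T lt) (g : T * T -> T) m :
  exists B, forall x y, (lt x m \/ x = m) -> (lt y m \/ y = m) -> lt (g (x, y)) B.
Proof.
  pose (b := fun x => epsilon (inhabits m)
     (fun B => forall y, (lt y m \/ y = m) -> lt (g (x, y)) B)).
  assert (Hb : forall x y, (lt y m \/ y = m) -> lt (g (x, y)) (b x)).
  { intros x. apply (epsilon_spec (inhabits m)
      (fun B => forall y, (lt y m \/ y = m) -> lt (g (x, y)) B)).
    apply (seg_bound_le T lt HR (fun y => g (x, y)) m). }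
  destruct (seg_bound_le T lt HR b m) as [B HB].
  exists B. intros x y Hx Hy.
  destruct HR as [[Hirr [Htr [Htot Hwf]]] _]. eauto.
Qed.
Lemma wf_lex (A B : Type) (RA : A -> A -> Prop) (RB : B -> B -> Prop) :
  well_founded RA -> well_founded RB ->
  well_founded (fun p q : A * B => RA (fst p) (fst q) \/ (fst p = fst q /\ RB (snd p) (snd q))).
Proof.
  intros HA HB [a b]. revert b. induction (HA a) as [a _ IHa]. intros b.
  induction (HB b) as [b _ IHb]. constructor. intros [a' b'] [H|[E H]]; simpl in *.
  - apply IHa; auto.
  - subst a'. apply IHb; auto.
Qed.

Lemma pairing (T : Type) (lt : T -> T -> Prop)
  (HR : regular_cardinal_ge_aleph2 T lt) :
  exists iota : T * T -> T, forall p q, iota p = iota q -> p = q.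
Proof.
  assert (HW : is_wellorder T lt) by apply HR.
  destruct (HR) as [[Hirr [Htr [Htot Hwf]]] [_ [_ [d _]]]].
  pose (mx := fun x y => if excluded_middle_informative (lt x y) then y else x).
  assert (Hmx1 : forall x y, lt x (mx x y) \/ x = mx x y).
  { intros x y; unfold mx; destruct (excluded_middle_informative (lt x y)); auto. }
  assert (Hmx2 : forall x y, lt y (mx x y) \/ y = mx x y).
  { intros x y; unfold mx; destruct (excluded_middle_informative (lt x y)); auto.
    destruct (Htot x y) as [H|[H|H]]; auto; contradiction. }
  pose (key := fun p : T * T => (mx (fst p) (snd p), (fst p, snd p))).
  pose (L2 := fun p q : T * T => lt (fst p) (fst q) \/ (fst p = fst q /\ lt (snd p) (snd q))).
  pose (L3 := fun p q : T * (T * T) => lt (fst p) (fst q) \/ (fst p = fst q /\ L2 (snd p) (snd q))).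
  pose (G := fun p q => L3 (key p) (key q)).
  assert (wfG : well_founded G).
  { apply (wf_inverse_image _ _ L3 key). exact (wf_lex _ _ lt L2 Hwf (wf_lex _ _ lt lt Hwf Hwf)). }
  assert (Gtot : forall p q, G p q \/ p = q \/ G q p).
  { intros [a b] [a' b']. unfold G, L3, L2, key; cbn [fst snd].
    destruct (Htot (mx a b) (mx a' b')) as [H|[H|H]]; [tauto| |tauto].
    destruct (Htot a a') as [H1|[H1|H1]];
      [left; right; split; auto| |right; right; right; split; auto]. subst a'.
    destruct (Htot b b') as [H2|[H2|H2]]; subst;
      [left; right; split; auto|auto|right; right; right; split; auto]. }
  assert (Gbox : forall q p, G q p -> (lt (fst q) (mx (fst p) (snd p)) \/ fst q = mx (fst p) (snd p))
                                  /\ (lt (snd q) (mx (fst p) (snd p)) \/ snd q = mx (fst p) (snd p))).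
  { intros [a b] [a' b']. unfold G, L3, L2, key; cbn [fst snd]. intros H.
    assert (Hm : lt (mx a b) (mx a' b') \/ mx a b = mx a' b') by (destruct H as [H|[H _]]; auto).
    split; [apply (le_trans' T lt HW a (mx a b)) | apply (le_trans' T lt HW b (mx a b))]; auto. }
  pose (F := fun (p : T * T) (rec : forall q, G q p -> T) =>
     epsilon (inhabits d) (fun t => ~ exists q (H : G q p), rec q H = t)).
  pose (iota := Fix wfG (fun _ => T) F).
  assert (Heq : forall p, iota p = epsilon (inhabits d) (fun t => ~ exists q (H : G q p), iota q = t)).
  { intros p. unfold iota. rewrite Fix_eq. reflexivity.
    intros x f g Hfg. unfold F.
    assert (E : f = g).
    { apply functional_extensionality_dep; intro y.
      apply functional_extensionality_dep; intro h. apply Hfg. }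
    rewrite E; reflexivity. }
  assert (Hkey : forall p q, G q p -> iota q <> iota p).
  { intros p. destruct (box_bound T lt HR iota (mx (fst p) (snd p))) as [B HB].
    assert (HP : ~ exists q (H : G q p), iota q = iota p).
    { assert (Hex : exists t, ~ exists q (H : G q p), iota q = t).
      { exists B. intros [q [Hq E]]. destruct (Gbox q p Hq) as [H1 H2].
        specialize (HB (fst q) (snd q) H1 H2). destruct q as [a b]; simpl in HB.
        rewrite E in HB. exact (Hirr B HB). }
      pose proof (epsilon_spec (inhabits d) (fun t => ~ exists q (H : G q p), iota q = t) Hex) as Hs.
      cbv beta in Hs. rewrite <- (Heq p) in Hs. exact Hs. }
    intros q Hq E. apply HP. exists q, Hq. exact E. }
  exists iota. intros p q E. destruct (Gtot p q) as [H|[H|H]]; auto.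
  - exfalso; exact (Hkey q p H E).
  - exfalso; exact (Hkey p q H (eq_sym E)).
Qed.
Lemma osr_cond4 (T : Type) (lt : T -> T -> Prop)
  (HR : regular_cardinal_ge_aleph2 T lt) (S : T -> Prop) (HS : stationary T lt S) :
  OSR T lt S -> cond4 T lt S.
Proof.
  intros HO M j Hm.
  assert (HW : is_wellorder T lt) by apply HR.
  destruct (pairing T lt HR) as [iota Hinj].
  pose proof HR as [[Hirr [Htr [Htot Hwf]]] [_ [_ [d _]]]].
  pose (Valid := fun b => exists p, iota p = b /\ lt (snd p) (j (fst p))).
  pose (pre := fun b => epsilon (inhabits (d, d)) (fun p => iota p = b)).
  assert (Hpre : forall b p, iota p = b -> pre b = p).
  { intros b p Hp. apply Hinj. rewrite Hp.
    apply (epsilon_spec (inhabits (d, d)) (fun p => iota p = b)). eauto. }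
  pose (cb := fun b => epsilon (inhabits d) (fun B => forall i, lt i (j b) -> lt (iota (b, i)) B)).
  assert (Hc : forall b i, lt i (j b) -> lt (iota (b, i)) (cb b)).
  { intros b. apply (epsilon_spec (inhabits d) (fun B => forall i, lt i (j b) -> lt (iota (b, i)) B)).
    apply (seg_bound T lt HR (fun i => iota (b, i)) (j b)). }
  pose (Sq := fun b x => ((Valid b /\ M (fst (pre b)) (snd (pre b)) x) \/ (~ Valid b /\ S x))
                         /\ (lt (cb b) x \/ cb b = x)).
  assert (HSq : forall b, stationary T lt (Sq b) /\ subset T (Sq b) S).
  { intros b. split.
    - destruct (classic (Valid b)) as [HV|HV].
      + destruct HV as [p [Hp Hj]].
        pose proof (Hpre b p Hp) as E.
        apply stat_up with (X := fun x => M (fst p) (snd p) x /\ (lt (cb b) x \/ cb b = x)).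
        * apply stat_tail; auto. apply (Hm _ _ Hj).
        * intros x [Hx1 Hx2]. split; auto. left. split; [exists p; auto|]. rewrite E; exact Hx1.
        * auto.
      + apply stat_up with (X := fun x => S x /\ (lt (cb b) x \/ cb b = x)).
        * apply stat_tail; auto.
        * intros x [Hx1 Hx2]. split; auto.
        * auto.
    - intros x [[[HV HM] | [_ HSx]] _]; [|exact HSx].
      destruct HV as [p [Hp Hj]]. rewrite (Hpre b p Hp) in HM. apply (Hm _ _ Hj); exact HM. }
  destruct (HO Sq HSq) as [dd [Hcof Hrefl]].
  exists dd; split; auto. intros a Ha i Hi.
  destruct (Hrefl a Ha) as [_ Hst].
  destruct (stat_nonempty T lt dd _ Hst) as [x [[_ Hx] Hxd]].
  assert (Hcd : lt (cb a) dd) by (destruct Hx as [Hx|Hx]; [eauto|subst; exact Hxd]).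
  assert (Hid : lt (iota (a, i)) dd) by eauto.
  destruct (Hrefl _ Hid) as [Hcof' Hst']. split; auto.
  apply stat_up with (1 := Hst').
  - intros y [[[[HV HM] | [HV _]] _] Hy]; split; auto.
    + rewrite (Hpre _ (a, i) eq_refl) in HM. exact HM.
    + exfalso; apply HV. exists (a, i); auto.
  - intros y [_ Hy]; exact Hy.
Qed.

Theorem lemma2p3 (T : Type) (lt : T -> T -> Prop)
  (Hlam : regular_cardinal_ge_aleph2 T lt)
  (S : T -> Prop) (HS : stationary T lt S) :
  (uDSR_lt_lambda T lt S <-> DSR_lt_lambda T lt S) /\
  (DSR_lt_lambda T lt S <-> OSR T lt S) /\
  (OSR T lt S <-> cond4 T lt S).
Proof.
  assert (HW : is_wellorder T lt) by apply Hlam.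
  assert (H21 : DSR_lt_lambda T lt S -> uDSR_lt_lambda T lt S).
  { intros HD M j Hm. destruct (HD M j Hm) as [g [Hc [F [[H1 [H2 H3]] H4]]]].
    exists g; split; auto. exists F; split; [exact H1|split; [exact H2|exact H4]]. }
  assert (H42 : cond4 T lt S -> DSR_lt_lambda T lt S).
  { intros H4 M j Hm. destruct (H4 M j Hm) as [g [Hc Hall]].
    exists g; split; auto. exists (below T lt g); split; [apply club_below|exact Hall]. }
  assert (H13 : uDSR_lt_lambda T lt S -> OSR T lt S).
  { intros HU Sq HSq.
    destruct (HU (fun a i => Sq i) (fun a => a)) as [g [Hcof [F [HF1 [HF2 HF3]]]]].
    { intros a i _; exact (HSq i). }
    exists g; split; auto. intros a Ha.
    pose proof Hcof as [_ Hc].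
    destruct (Hc (fun _ => a) (fun _ => Ha)) as [y [Hy Hay]]. specialize (Hay 0).
    destruct (HF2 y Hy) as [c [Fc Hyc]].
    apply (HF3 c Fc a). eapply lt_le_trans; eauto. }
  pose proof (osr_cond4 T lt Hlam S HS) as H34.
  tauto.
Qed.
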